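(* Let $M=15$, let $1\le i_1<i_2<\dots<i_k$ and $j_1,\dots,j_k$ be positive integers such that $i_{l+1}-i_l\ge j_l$ for each $1\le l<k$. Then $\widehat Q_{i_1\cdots i_k}^{j_1\cdots j_k}$ consists of at most $M^k2^{\,i_k-j_1-j_2-\cdots-j_{k-1}}$ intervals in $\mathcal D_{i_k+j_k}$.
   Context: $\mathbb T=\mathbb R/\mathbb Z\cong[0,1)$, $Tx=2x\bmod1$, $d$ the usual distance on $\mathbb T$. $\mathcal D_n$ is the collection of dyadic intervals $[m/2^n,(m+1)/2^n)$. For $i,j\ge1$, $Q_i^j=\{x:d(T^ix,x)\le2^{-j}\}$ and $\widehat Q_i^j$ is the union of all intervals of $\mathcal D_{i+j}$ that intersect $Q_i^j$. Then $\widehat Q_{i_1\cdots i_k}^{j_1\cdots j_k}:=\bigcap_{\nu=1}^k\widehat Q_{i_\nu}^{j_\nu}$. *)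

(* Defs.v *)
From Stdlib Require Import Reals Lra Lia ZArith List.
Open Scope R_scope.

Definition frac (x : R) : R := x - IZR (Int_part x).

(* the doubling map T x = 2x mod 1 on T = R/Z ≅ [0,1) *)
Definition Tmap (x : R) : R := frac (2 * x).

Fixpoint Titer (n : nat) (x : R) : R :=
  match n with O => x | S n' => Tmap (Titer n' x) end.

Definition dT (x y : R) : R := Rmin (frac (x - y)) (1 - frac (x - y)).

(* dyadic interval [m/2^n, (m+1)/2^n) of D_n (for m < 2^n) *)
Definition in_dyadic (n m : nat) (x : R) : Prop :=
  INR m / 2 ^ n <= x < (INR m + 1) / 2 ^ n.

Definition Q (i j : nat) (x : R) : Prop :=
  0 <= x < 1 /\ dT (Titer i x) x <= / 2 ^ j.

Definition Qhat (i j : nat) (x : R) : Prop :=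
  exists m : nat, (m < 2 ^ (i + j))%nat /\ in_dyadic (i + j) m x /\
    exists y, in_dyadic (i + j) m y /\ Q i j y.

Definition Qhat_multi (k : nat) (i j : nat -> nat) (x : R) : Prop :=
  forall nu : nat, (1 <= nu <= k)%nat -> Qhat (i nu) (j nu) x.

Definition sum_j_upto (j : nat -> nat) (k : nat) : nat :=
  fold_right Nat.add 0%nat (map j (seq 1 (k - 1))).

Definition M : R := 15.

(* Main.v *)
Require Import Defs.
From Stdlib Require Import Reals ZArith List Lra Lia Psatz ClassicalEpsilon.
Open Scope R_scope.

Lemma Int_part_unique (r : R) (z : Z) : IZR z <= r < IZR z + 1 -> Int_part r = z.
Proof.
  intros [H1 H2]. unfold Int_part.
  assert (up r = (z + 1)%Z).
  { symmetry; apply tech_up; rewrite plus_IZR; simpl; lra. }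
  lia.
Qed.

Lemma frac_shift (r : R) (z : Z) : frac (r + IZR z) = frac r.
Proof.
  unfold frac. destruct (base_Int_part r) as [H1 H2].
  rewrite (Int_part_unique (r + IZR z) (Int_part r + z)).
  - rewrite plus_IZR; ring.
  - rewrite plus_IZR; lra.
Qed.

Lemma frac_bounds r : 0 <= frac r < 1.
Proof. unfold frac. destruct (base_Int_part r). lra. Qed.

Lemma frac_2 r : frac (2 * frac r) = frac (2 * r).
Proof.
  unfold frac at 2. replace (2 * (r - IZR (Int_part r))) with (2 * r + IZR (-2 * Int_part r)).
  - apply frac_shift.
  - rewrite mult_IZR; simpl; ring.
Qed.

Lemma Titer_frac i y : 0 <= y < 1 -> Titer i y = frac (2 ^ i * y).
Proof.
  intros Hy. induction i as [|i IH]; simpl.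
  - unfold frac. rewrite (Int_part_unique _ 0%Z); simpl; lra.
  - rewrite IH. unfold Tmap. rewrite frac_2. f_equal. ring.
Qed.

Definition Cond (i j m : nat) : Prop :=
  exists p : nat, (2^i * m <= p * 2^(i+j) + 2^i + m)%nat /\
                  (p * 2^(i+j) + m + 1 < 2^i * (m+1) + 2^i)%nat.

Lemma INR_Z_to_nat (z : Z) : (0 <= z)%Z -> INR (Z.to_nat z) = IZR z.
Proof. intros H. rewrite INR_IZR_INZ, Z2Nat.id; auto. Qed.

Lemma Q_cond (i j m : nat) (y : R) : (1 <= i)%nat -> in_dyadic (i+j) m y -> Q i j y -> Cond i j m.
Proof.
  intros Hi [Hd1 Hd2] [Hy Hq].
  rewrite Titer_frac in Hq by exact Hy.
  unfold dT in Hq.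
  set (Pr := 2 ^ i) in *.
  assert (HP : 2 <= Pr).
  { unfold Pr. destruct i; [lia|]. simpl. assert (1 <= 2 ^ i) by (apply pow_R1_Rle; lra). lra. }
  assert (HB : 2 <= 2 ^ j \/ j = 0%nat).
  { destruct j; [right; reflexivity|left]. simpl. assert (1 <= 2 ^ j) by (apply pow_R1_Rle; lra). lra. }
  assert (HBp : 0 < 2 ^ j) by (apply pow_lt; lra).
  set (Br := 2 ^ j) in *.
  assert (HN : 2 ^ (i + j) = Pr * Br) by (unfold Pr, Br; apply pow_add).
  rewrite HN in Hd1, Hd2.
  assert (Hf : frac (frac (Pr * y) - y) = frac ((Pr - 1) * y)).
  { unfold frac at 2. replace (Pr * y - IZR (Int_part (Pr * y)) - y) with ((Pr - 1) * y + IZR (- Int_part (Pr * y))).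
    - apply frac_shift.
    - rewrite opp_IZR; ring. }
  rewrite Hf in Hq.
  set (w := (Pr - 1) * y) in *.
  assert (Hw : 0 <= w) by (unfold w; nra).
  destruct (base_Int_part w) as [Hz1 Hz2].
  set (z := Int_part w) in *.
  assert (Hz0 : (0 <= z)%Z).
  { assert (-1 < IZR z) by lra. apply lt_IZR in H. lia. }
  assert (Hp : exists p : nat, INR p - / Br <= w <= INR p + / Br).
  { unfold Rmin in Hq. unfold frac in Hq. fold z in Hq.
    destruct (Rle_dec (w - IZR z) (1 - (w - IZR z))).
    - exists (Z.to_nat z). rewrite INR_Z_to_nat by lia.
      assert (0 < / Br) by (apply Rinv_0_lt_compat; lra). split; lra.
    - exists (Z.to_nat (z + 1)). rewrite INR_Z_to_nat by lia. rewrite plus_IZR. simpl. lra. }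
  destruct Hp as [p [Hp1 Hp2]].
  exists p.
  set (u := y * (Pr * Br)).
  assert (Hu1 : INR m <= u).
  { unfold u. apply Rmult_le_reg_r with (/ (Pr * Br)).
    - apply Rinv_0_lt_compat; nra.
    - rewrite Rmult_assoc, Rinv_r by nra. lra. }
  assert (Hu2 : u < INR m + 1).
  { unfold u. apply Rmult_lt_reg_r with (/ (Pr * Br)).
    - apply Rinv_0_lt_compat; nra.
    - rewrite Rmult_assoc, Rinv_r by nra. lra. }
  assert (He : / Br * (Pr * Br) = Pr) by (field; lra).
  assert (Hw1 : INR p * (Pr * Br) - Pr <= (Pr - 1) * u).
  { assert (X: (INR p - / Br) * (Pr * Br) <= w * (Pr * Br)) by (apply Rmult_le_compat_r; nra).
    replace ((INR p - / Br) * (Pr * Br)) with (INR p * (Pr * Br) - Pr) in X by (field; lra).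
    replace ((Pr - 1) * u) with (w * (Pr * Br)) by (unfold w, u; ring). exact X. }
  assert (Hw2 : (Pr - 1) * u <= INR p * (Pr * Br) + Pr).
  { assert (X: w * (Pr * Br) <= (INR p + / Br) * (Pr * Br)) by (apply Rmult_le_compat_r; nra).
    replace ((INR p + / Br) * (Pr * Br)) with (INR p * (Pr * Br) + Pr) in X by (field; lra).
    replace ((Pr - 1) * u) with (w * (Pr * Br)) by (unfold w, u; ring). exact X. }
  assert (H2 : INR 2 = 2) by (simpl; ring).
  split.
  - apply INR_le. rewrite !plus_INR, !mult_INR, !pow_INR, H2. fold Pr. rewrite pow_add. fold Pr Br.
    nra.
  - apply INR_lt. rewrite !plus_INR, !mult_INR, !plus_INR, !pow_INR, H2. fold Pr. rewrite pow_add. fold Pr Br.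
    simpl. nra.
Qed.
Lemma dyadic_unique n m m' x : in_dyadic n m x -> in_dyadic n m' x -> m = m'.
Proof.
  unfold in_dyadic. intros [H1 H2] [H3 H4].
  assert (Hp : 0 < 2 ^ n) by (apply pow_lt; lra).
  assert (A : INR m < INR m' + 1).
  { apply Rmult_lt_reg_r with (/ 2 ^ n). apply Rinv_0_lt_compat; lra. unfold Rdiv in *. lra. }
  assert (B : INR m' < INR m + 1).
  { apply Rmult_lt_reg_r with (/ 2 ^ n). apply Rinv_0_lt_compat; lra. unfold Rdiv in *. lra. }
  rewrite <- S_INR in A, B. apply INR_lt in A. apply INR_lt in B. lia.
Qed.

Lemma dyadic_nest (n a m : nat) (x : R) : (a <= n)%nat -> in_dyadic n m x -> in_dyadic a (m / 2^(n-a)) x.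
Proof.
  unfold in_dyadic. intros Han [H1 H2].
  set (D := (2 ^ (n - a))%nat).
  assert (HD : (D <> 0)%nat) by (unfold D; apply Nat.pow_nonzero; lia).
  pose proof (Nat.div_mod m D HD) as Hm.
  pose proof (Nat.mod_upper_bound m D HD) as Hr.
  set (q := (m / D)%nat) in *. set (r := (m mod D)%nat) in *.
  assert (HDr : INR D = 2 ^ (n - a)) by (unfold D; rewrite pow_INR; simpl; f_equal; ring).
  assert (Hn : 2 ^ n = 2 ^ a * INR D).
  { rewrite HDr, <- pow_add. f_equal. lia. }
  assert (HA : 0 < 2 ^ a) by (apply pow_lt; lra).
  assert (HD0 : 0 < INR D) by (apply lt_0_INR; lia).
  assert (L1 : INR D * INR q <= INR m).
  { rewrite <- mult_INR. apply le_INR. lia. }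
  assert (L2 : INR m + 1 <= INR D * INR q + INR D).
  { rewrite <- mult_INR, <- S_INR, <- plus_INR. apply le_INR. lia. }
  rewrite Hn in H1, H2.
  split.
  - apply Rle_trans with (INR m / (2 ^ a * INR D)); auto.
    replace (INR q / 2 ^ a) with (INR D * INR q / (2 ^ a * INR D)) by (field; lra).
    unfold Rdiv. apply Rmult_le_compat_r; auto. left; apply Rinv_0_lt_compat; nra.
  - apply Rlt_le_trans with ((INR m + 1) / (2 ^ a * INR D)); auto.
    replace ((INR q + 1) / 2 ^ a) with ((INR D * INR q + INR D) / (2 ^ a * INR D)) by (field; lra).
    unfold Rdiv. apply Rmult_le_compat_r; auto. left; apply Rinv_0_lt_compat; nra.
Qed.

Definition Cand (i j a m0 : nat) : list nat :=
  flat_map (fun p => map (fun t => ((p * 2^(i+j) + 2^i) / (2^i - 1) - t)%nat) (seq 0 5))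
           (seq (((2^i - 1) * m0 * 2^(i + j - a) - 2^i) / 2^(i+j)) (2^(i-a) + 2)).

Lemma block (i j a m : nat) : (1 <= i)%nat -> (1 <= j)%nat -> (a <= i)%nat ->
  Cond i j m -> In m (Cand i j a (m / 2^(i+j-a))).
Proof.
  intros Hi Hj Ha [p [C1 C2]]. unfold Cand.
  assert (HP : (2 <= 2^i)%nat) by (apply (Nat.pow_le_mono_r 2 1 i); lia).
  assert (HB : (2 <= 2^j)%nat) by (apply (Nat.pow_le_mono_r 2 1 j); lia).
  assert (HNn : (2^(i+j) = 2^i * 2^j)%nat) by apply Nat.pow_add_r.
  assert (HPD : (2^i * 2^(i+j-a) = 2^(i+j) * 2^(i-a))%nat).
  { rewrite <- !Nat.pow_add_r. f_equal. lia. }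
  assert (HD : (1 <= 2^(i+j-a))%nat) by (apply Nat.neq_0_lt_0, Nat.pow_nonzero; lia).
  assert (HE : (1 <= 2^(i-a))%nat) by (apply Nat.neq_0_lt_0, Nat.pow_nonzero; lia).
  set (P := (2^i)%nat) in *. set (Nn := (2^(i+j))%nat) in *.
  set (D := (2^(i+j-a))%nat) in *. set (E := (2^(i-a))%nat) in *.
  set (N := (P - 1)%nat).
  assert (HPN : P = (N + 1)%nat) by (unfold N; lia).
  assert (H2P : (2 * P <= Nn)%nat) by (rewrite HNn; nia).
  pose proof (Nat.div_mod m D ltac:(lia)) as Hm.
  pose proof (Nat.mod_upper_bound m D ltac:(lia)) as Hr.
  set (m0 := (m / D)%nat) in *. set (r := (m mod D)%nat) in *.
  assert (C1' : (N * m <= p * Nn + P)%nat) by (rewrite HPN in C1; nia).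
  assert (C2' : (p * Nn < N * (m + 1) + P)%nat) by (rewrite HPN in C2; nia).
  clear C1 C2.
  apply in_flat_map. exists p. split.
  - apply in_seq.
    set (X := (N * m0 * D - P)%nat).
    pose proof (Nat.div_mod X Nn ltac:(lia)) as HX.
    pose proof (Nat.mod_upper_bound X Nn ltac:(lia)) as HXr.
    set (p0 := (X / Nn)%nat) in *.
    assert (HXv : (N * m0 * D < Nn * p0 + Nn + P)%nat) by (assert (N * m0 * D <= X + P)%nat by (unfold X; lia); lia).
    split.
    + apply Nat.div_le_upper_bound; [lia|].
      assert (N * (D * m0) <= N * m)%nat by (apply Nat.mul_le_mono_l; lia).
      unfold X. lia.
    + destruct (Nat.lt_ge_cases p (p0 + (E + 2))) as [Hlt|Hge]; [exact Hlt|exfalso].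
      assert ((p0 + (E + 2)) * Nn <= p * Nn)%nat by (apply Nat.mul_le_mono_r; lia).
      assert (N * (m + 1) <= N * (D * m0 + D))%nat by (apply Nat.mul_le_mono_l; lia).
      assert (N * D < P * D)%nat by (apply Nat.mul_lt_mono_pos_r; lia).
      lia.
  - apply in_map_iff.
    set (q := ((p * Nn + P) / N)%nat).
    assert (Hq1 : (m <= q)%nat).
    { apply Nat.div_le_lower_bound; [lia|]. lia. }
    assert (Hq2 : (q < m + 5)%nat).
    { apply Nat.div_lt_upper_bound; [lia|]. lia. }
    exists (q - m)%nat. split; [lia|]. apply in_seq. lia.
Qed.


Definition nn (i j : nat -> nat) (l : nat) : nat :=
  match l with O => O | S _ => (i l + j l)%nat end.

Fixpoint Lst (i j : nat -> nat) (l : nat) : list nat :=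
  match l with
  | O => 0%nat :: nil
  | S l' => flat_map (Cand (i (S l')) (j (S l')) (nn i j l')) (Lst i j l')
  end.

Lemma flat_map_length_const {A B : Type} (f : A -> list B) c l :
  (forall x, length (f x) = c) -> length (flat_map f l) = (c * length l)%nat.
Proof. intros H. induction l as [|x l IH]; simpl; [lia|]. rewrite length_app, H, IH. lia. Qed.

Lemma Cand_length i j a m0 : length (Cand i j a m0) = (5 * (2^(i-a) + 2))%nat.
Proof.
  unfold Cand. rewrite (flat_map_length_const _ 5%nat).
  - rewrite length_seq. reflexivity.
  - intros x. rewrite length_map, length_seq. reflexivity.
Qed.

Lemma fold_shift (xs : list nat) (c : nat) :
  fold_right Nat.add c xs = (c + fold_right Nat.add 0 xs)%nat.
Proof. induction xs; simpl; lia. Qed.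

Lemma sum_j_S (j : nat -> nat) (l : nat) :
  sum_j_upto j (S (S l)) = (sum_j_upto j (S l) + j (S l))%nat.
Proof.
  unfold sum_j_upto. replace (S (S l) - 1)%nat with (S l) by lia.
  replace (S l - 1)%nat with l by lia.
  rewrite seq_S, map_app, fold_right_app. simpl.
  rewrite fold_shift. lia.
Qed.

Lemma nn_pos i j l : (1 <= l)%nat -> nn i j l = (i l + j l)%nat.
Proof. destruct l; [lia|reflexivity]. Qed.

Lemma pow2_nz n : (2 ^ n <> 0)%nat.
Proof. apply Nat.pow_nonzero; lia. Qed.


Lemma i_ge1 (k : nat) (i : nat -> nat)
  (hi1 : (1 <= i 1%nat)%nat)
  (hinc : forall l : nat, (1 <= l < k)%nat -> (i l < i (S l))%nat) :
  forall l, (1 <= l <= k)%nat -> (1 <= i l)%nat.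
Proof.
  induction l as [|l IH]; intros Hl; [lia|].
  destruct l as [|l]; [exact hi1|].
  specialize (hinc (S l) ltac:(lia)). specialize (IH ltac:(lia)). lia.
Qed.

Lemma nn_le_i (k : nat) (i j : nat -> nat)
  (hinc : forall l : nat, (1 <= l < k)%nat -> (i l < i (S l))%nat)
  (hgap : forall l : nat, (1 <= l < k)%nat -> (j l <= i (S l) - i l)%nat) :
  forall l, (l < k)%nat -> (nn i j l <= i (S l))%nat.
Proof.
  intros l Hl. destruct l as [|l]; simpl; [lia|].
  specialize (hinc (S l) ltac:(lia)). specialize (hgap (S l) ltac:(lia)). lia.
Qed.

Lemma nn_mono (k : nat) (i j : nat -> nat)
  (hinc : forall l : nat, (1 <= l < k)%nat -> (i l < i (S l))%nat)
  (hgap : forall l : nat, (1 <= l < k)%nat -> (j l <= i (S l) - i l)%nat) :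
  forall l l', (l <= l')%nat -> (l' <= k)%nat -> (nn i j l <= nn i j l')%nat.
Proof.
  intros l l'. induction l' as [|l' IH]; intros H1 H2.
  - replace l with 0%nat by lia. lia.
  - destruct (Nat.eq_dec l (S l')) as [->|Hne]; [lia|].
    specialize (IH ltac:(lia) ltac:(lia)).
    pose proof (nn_le_i k i j hinc hgap l' ltac:(lia)).
    change (nn i j (S l')) with (i (S l') + j (S l'))%nat. lia.
Qed.

Lemma inv (k : nat) (i j : nat -> nat)
  (hi1 : (1 <= i 1%nat)%nat)
  (hinc : forall l : nat, (1 <= l < k)%nat -> (i l < i (S l))%nat)
  (hjpos : forall l : nat, (1 <= l <= k)%nat -> (1 <= j l)%nat)
  (hgap : forall l : nat, (1 <= l < k)%nat -> (j l <= i (S l) - i l)%nat) :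
  forall l, (l <= k)%nat -> forall m, (m < 2 ^ (nn i j l))%nat ->
    (forall l', (1 <= l' <= l)%nat -> Cond (i l') (j l') (m / 2 ^ (nn i j l - nn i j l'))) ->
    In m (Lst i j l).
Proof.
  induction l as [|l IH]; intros Hl m Hm Hc.
  - simpl in Hm. simpl. left. lia.
  - cbn [Lst]. apply in_flat_map.
    pose proof (nn_mono k i j hinc hgap l (S l) ltac:(lia) Hl) as Hmono.
    set (d := (nn i j (S l) - nn i j l)%nat).
    exists (m / 2 ^ d)%nat. split.
    + apply IH; [lia| |].
      * apply Nat.div_lt_upper_bound; [apply pow2_nz|].
        rewrite <- Nat.pow_add_r. replace (d + nn i j l)%nat with (nn i j (S l)) by (unfold d; lia). exact Hm.
      * intros l' Hl'. rewrite Nat.div_div by apply pow2_nz. rewrite <- Nat.pow_add_r.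
        pose proof (nn_mono k i j hinc hgap l' l ltac:(lia) ltac:(lia)).
        replace (d + (nn i j l - nn i j l'))%nat with (nn i j (S l) - nn i j l')%nat by (unfold d; lia).
        apply Hc. lia.
    + specialize (Hc (S l) ltac:(lia)). rewrite Nat.sub_diag, Nat.pow_0_r, Nat.div_1_r in Hc.
      unfold d. change (nn i j (S l)) with (i (S l) + j (S l))%nat.
      apply block; auto.
      * apply (i_ge1 k i hi1 hinc); lia.
      * apply hjpos; lia.
      * apply (nn_le_i k i j hinc hgap); lia.
Qed.

Lemma len_bound (k : nat) (i j : nat -> nat)
  (hi1 : (1 <= i 1%nat)%nat)
  (hinc : forall l : nat, (1 <= l < k)%nat -> (i l < i (S l))%nat)
  (hgap : forall l : nat, (1 <= l < k)%nat -> (j l <= i (S l) - i l)%nat) :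
  forall l, (1 <= l <= k)%nat ->
    (length (Lst i j l) * 2 ^ (sum_j_upto j l) <= 15 ^ l * 2 ^ (i l))%nat.
Proof.
  induction l as [|l IH]; intros Hl; [lia|].
  destruct l as [|l].
  - cbn [Lst]. rewrite (flat_map_length_const _ (5 * (2 ^ (i 1%nat - nn i j 0) + 2))%nat)
      by (intros; apply Cand_length).
    change (sum_j_upto j 1) with 0%nat. simpl nn. rewrite Nat.sub_0_r.
    assert (1 <= 2 ^ i 1%nat)%nat by (apply Nat.neq_0_lt_0, pow2_nz). simpl length. rewrite Nat.pow_0_r, Nat.pow_1_r. lia.
  - specialize (IH ltac:(lia)).
    cbn [Lst]. rewrite (flat_map_length_const _ (5 * (2 ^ (i (S (S l)) - nn i j (S l)) + 2))%nat)
      by (intros; apply Cand_length).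
    rewrite sum_j_S. change (nn i j (S l)) with (i (S l) + j (S l))%nat.
    pose proof (nn_le_i k i j hinc hgap (S l) ltac:(lia)) as Hle.
    change (nn i j (S l)) with (i (S l) + j (S l))%nat in Hle.
    set (E := (2 ^ (i (S (S l)) - (i (S l) + j (S l))))%nat).
    assert (HE : (1 <= E)%nat) by (apply Nat.neq_0_lt_0, pow2_nz).
    assert (Hpow : (2 ^ i (S (S l)) = E * 2 ^ i (S l) * 2 ^ j (S l))%nat).
    { unfold E. rewrite <- !Nat.pow_add_r. f_equal. lia. }
    rewrite Hpow, Nat.pow_add_r.
    assert (A1 : (5 * (E + 2) <= 15 * E)%nat) by lia.
    pose proof (Nat.mul_le_mono _ _ _ _ A1 IH) as A2.
    pose proof (Nat.mul_le_mono_r _ _ (2 ^ j (S l)) A2) as A3.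
    change (15 ^ S (S l))%nat with (15 * 15 ^ S l)%nat.
    set (L := length (Lst i j (S l))) in *.
    set (S0 := (2 ^ sum_j_upto j (S l))%nat) in *.
    set (Jp := (2 ^ j (S l))%nat) in *.
    set (Ip := (2 ^ i (S l))%nat) in *.
    set (F := (15 ^ S l)%nat) in *.
    change (length (flat_map (Cand (i (S l)) (j (S l)) (nn i j l)) (Lst i j l))) with L. lia.
Qed.

Lemma link (n a m ml : nat) (x : R) : (a <= n)%nat -> in_dyadic n m x -> in_dyadic a ml x ->
  ml = (m / 2 ^ (n - a))%nat.
Proof.
  intros Ha H1 H2. apply (dyadic_unique a _ _ x); auto. apply dyadic_nest; auto.
Qed.

Lemma real_bound (len a b k : nat) : (len * 2 ^ b <= 15 ^ k * 2 ^ a)%nat ->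
  INR len <= M ^ k * powerRZ 2 (Z.of_nat a - Z.of_nat b)%Z.
Proof.
  intros H. apply le_INR in H. rewrite !mult_INR, !pow_INR in H.
  replace (INR 2) with 2 in H by (simpl; ring).
  replace (INR 15) with 15 in H by (simpl; ring).
  unfold M, Z.sub. rewrite powerRZ_add by lra. rewrite powerRZ_neg', <- !pow_powerRZ.
  assert (0 < 2 ^ b) by (apply pow_lt; lra).
  apply Rmult_le_reg_r with (2 ^ b); auto.
  replace (15 ^ k * (2 ^ a * / 2 ^ b) * 2 ^ b) with (15 ^ k * 2 ^ a) by (field; lra).
  exact H.
Qed.

Theorem lemma4p4 (k : nat) (i j : nat -> nat)
  (hk : (1 <= k)%nat)
  (hi1 : (1 <= i 1%nat)%nat)
  (hinc : forall l : nat, (1 <= l < k)%nat -> (i l < i (S l))%nat)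
  (hjpos : forall l : nat, (1 <= l <= k)%nat -> (1 <= j l)%nat)
  (hgap : forall l : nat, (1 <= l < k)%nat -> (j l <= i (S l) - i l)%nat) :
  exists s : list nat,
    (forall m, In m s -> (m < 2 ^ (i k + j k))%nat) /\
    (forall x : R, Qhat_multi k i j x <->
       exists m, In m s /\ in_dyadic (i k + j k) m x) /\
    INR (length s) <=
      M ^ k * powerRZ 2 (Z.of_nat (i k) - Z.of_nat (sum_j_upto j k))%Z.
Proof.
  set (n := (i k + j k)%nat).
  assert (Hnl : forall l, (1 <= l <= k)%nat -> (i l + j l <= n)%nat).
  { intros l Hl. unfold n. rewrite <- (nn_pos i j l), <- (nn_pos i j k) by lia.
    apply (nn_mono k i j hinc hgap); lia. }
  set (Pm := fun m => forall z, in_dyadic n m z -> Qhat_multi k i j z).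
  set (s := filter (fun m => if excluded_middle_informative (Pm m) then true else false) (seq 0 (2 ^ n))).
  assert (Hs : forall m, In m s <-> (m < 2 ^ n)%nat /\ Pm m).
  { intros m. unfold s. rewrite filter_In, in_seq.
    destruct (excluded_middle_informative (Pm m)); split; intros; intuition; discriminate. }
  exists s. split; [|split].
  - intros m Hm. apply Hs in Hm. tauto.
  - intros x. split.
    + intros Hx. destruct (Hx k ltac:(lia)) as [mk [Hmk [Hxk _]]].
      exists mk. split; auto. apply Hs. split; auto.
      intros z Hz nu Hnu.
      destruct (Hx nu Hnu) as [ml [Hml [Hxl [y [Hyl HQ]]]]].
      exists ml. split; auto. split; [|exists y; auto].
      rewrite (link n (i nu + j nu) mk ml x (Hnl nu Hnu) Hxk Hxl).
      apply dyadic_nest; auto.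
    + intros [m [Hm Hx]]. apply Hs in Hm. destruct Hm as [_ Hm]. apply Hm; auto.
  - apply real_bound.
    assert (Hlen : (length s <= length (Lst i j k))%nat).
    { apply NoDup_incl_length.
      - apply NoDup_filter, seq_NoDup.
      - intros m Hm. apply Hs in Hm. destruct Hm as [Hm HP].
        apply (inv k i j hi1 hinc hjpos hgap k (le_n k)).
        + rewrite nn_pos by lia. exact Hm.
        + intros l' Hl'.
          set (x := INR m / 2 ^ n).
          assert (Hx : in_dyadic n m x).
          { unfold in_dyadic, x. split; [lra|].
            assert (0 < 2 ^ n) by (apply pow_lt; lra).
            unfold Rdiv. apply Rmult_lt_compat_r; [apply Rinv_0_lt_compat; lra|lra]. }
          destruct (HP x Hx l' Hl') as [ml [Hml [Hxl [y [Hyl HQ]]]]].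
          rewrite (nn_pos i j k), (nn_pos i j l') by lia. fold n.
          rewrite <- (link n (i l' + j l') m ml x (Hnl l' Hl') Hx Hxl).
          apply (Q_cond _ _ _ y); auto.
          apply (i_ge1 k i hi1 hinc); lia. }
    pose proof (len_bound k i j hi1 hinc hgap k ltac:(lia)).
    eapply Nat.le_trans; [|eassumption].
    apply Nat.mul_le_mono_r. exact Hlen.
Qed.
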